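(* For every $w\in[0,1]$ (with $0\log 0=0$), $$g(w)=1-\sum_{n\ge1}\frac{(n-1)^{n-1}}{n!}\bigl(-w\log w\bigr)^n$$ and $$\log g(w)=\sum_{n\ge1}\frac{(-n)^{n-1}}{n!}\bigl(w\log w\bigr)^n=W_0(w\log w),$$ the series converging absolutely; here $0^0=1$. In particular $g(w)=f(w)$ for $0\le w\le 1/e$ and $g(w)=w$ (so $W_0(w\log w)=\log w$) for $1/e\le w\le1$.
   Context: Let $\phi(x)=-x\log x$ on $[0,1]$ (with $\phi(0)=0$); it is strictly increasing on $[0,1/e]$ and strictly decreasing on $[1/e,1]$. Let $l,r$ be its restrictions to $[0,1/e]$ and $[1/e,1]$. Define $f(x)=r^{-1}(\phi(x))$ for $0\le x\le 1/e$, $f(x)=l^{-1}(\phi(x))$ for $1/e\le x\le1$, and $g(x)=r^{-1}(\phi(x))$ for $0\le x\le1$. $W_0$ denotes the principal branch of the Lambert $W$ function (the inverse of $u\mapsto ue^u$ on $[-1,\infty)$), defined on $[-1/e,\infty)$. *)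

(* Defs.v *)
From Stdlib Require Import Reals Lra ClassicalEpsilon.
From Coquelicot Require Import Coquelicot.
Open Scope R_scope.

(* phi(x) = -x log x ; for x = 0 this is 0 (0 * ln 0 = 0 in Stdlib). *)
Definition phi (x : R) : R := - x * ln x.

Definition inv_on (a b : R) (h : R -> R) (y : R) : R :=
  epsilon (inhabits 0) (fun x => a <= x <= b /\ h x = y).

Definition l_inv (y : R) : R := inv_on 0 (/ exp 1) phi y.
Definition r_inv (y : R) : R := inv_on (/ exp 1) 1 phi y.

Definition f (x : R) : R :=
  if Rle_dec x (/ exp 1) then r_inv (phi x) else l_inv (phi x).
Definition g (x : R) : R := r_inv (phi x).

Definition W0 (y : R) : R :=
  epsilon (inhabits 0) (fun u => -1 <= u /\ u * exp u = y).

(* The two series, indexed by k = n - 1 >= 0 (n >= 1). Note 0^0 = 1 in Stdlib. *)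
Definition term_g (w : R) (k : nat) : R :=
  let n := S k in (INR (n - 1)) ^ (n - 1) / INR (Factorial.fact n) * (phi w) ^ n.
Definition term_logg (w : R) (k : nat) : R :=
  let n := S k in (- INR n) ^ (n - 1) / INR (Factorial.fact n) * (w * ln w) ^ n.

(* Main.v *)
Require Import Defs.
From Stdlib Require Import Reals.
From Coquelicot Require Import Coquelicot.
Open Scope R_scope.
From Stdlib Require Import Lra Lia ClassicalEpsilon Factorial.


Definition FD (M : nat) (c : R) (i : nat) : R :=
  sum_f_R0 (fun k => (-1)^(M-k) * (c + INR k)^i / (INR (fact k) * INR (fact (M-k)))) M.

Lemma FD_base M c : FD (S M) c 0 = 0.
Proof.
  assert (H := binomial 1 (-1) (S M)).
  replace (1 + -1) with 0 in H by ring. rewrite pow_i in H by lia.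
  unfold FD.
  transitivity (/ INR (fact (S M)) * sum_f_R0 (fun i : nat => Binomial.C (S M) i * 1 ^ i * (-1) ^ (S M - i)) (S M)).
  - rewrite scal_sum. apply sum_eq. intros i Hi. unfold Binomial.C. rewrite pow1.
    simpl pow at 2. field; repeat split; apply INR_fact_neq_0.
  - rewrite <- H. ring.
Qed.

Lemma FD_rec M c i : FD (S M) c (S i) = c * FD (S M) c i + FD M (c+1) i.
Proof.
  unfold FD.
  transitivity (sum_f_R0 (fun k => ((-1)^(S M-k) * (c + INR k)^i / (INR (fact k) * INR (fact (S M-k)))) * c
     + (-1)^(S M-k) * INR k * (c + INR k)^i / (INR (fact k) * INR (fact (S M-k)))) (S M)).
  - apply sum_eq. intros k Hk. simpl pow. field; repeat split; apply INR_fact_neq_0.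
  - rewrite sum_plus. rewrite <- scal_sum. f_equal.
    rewrite decomp_sum by lia. simpl pred. simpl INR at 1. rewrite Rmult_0_r, Rmult_0_l.
    unfold Rdiv at 1. rewrite Rmult_0_l, Rplus_0_l.
    apply sum_eq. intros k Hk.
    replace (S M - S k)%nat with (M - k)%nat by lia.
    rewrite fact_simpl, mult_INR, S_INR.
    replace (c + (INR k + 1)) with (c + 1 + INR k) by ring.
    field. split; [apply INR_fact_neq_0|]. split; [apply INR_fact_neq_0|].
    pose proof (pos_INR k); lra.
Qed.

Lemma FD_zero M : forall i c, (i < M)%nat -> FD M c i = 0.
Proof.
  induction M as [|M IH]; intros i c Hi; [lia|].
  revert c. induction i as [|i IHi]; intros c.
  - apply FD_base.
  - rewrite FD_rec. rewrite IHi by lia. rewrite IH by lia. ring.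
Qed.


Definition B (k : nat) : R := INR (S k) ^ k / INR (fact (S k)).
Definition Q (z : R) (m : nat) : R := (z + INR m) ^ m / INR (fact m).
Definition A (n : nat) (z : R) : R := sum_f_R0 (fun k => B k * Q z (n - k)) n.

Lemma pow_deriv (c : R) (m : nat) (z : R) :
  is_derive (fun z => (z + c) ^ (S m)) z (INR (S m) * (z + c) ^ m).
Proof.
  auto_derive; [auto|]. rewrite Rmult_1_l. reflexivity.
Qed.

Lemma Q_deriv (a : R) (m : nat) (z : R) :
  is_derive (fun z => Q (z + a) (S m)) z (Q (z + a + 1) m).
Proof.
  unfold Q.
  assert (H : is_derive (fun t => / INR (fact (S m)) * (t + (a + INR (S m))) ^ S m) z
     (/ INR (fact (S m)) * (INR (S m) * (z + (a + INR (S m))) ^ m))).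
  { apply is_derive_scal. apply pow_deriv. }
  replace ((z + a + 1 + INR m) ^ m / INR (fact m)) with
     (/ INR (fact (S m)) * (INR (S m) * (z + (a + INR (S m))) ^ m)).
  - eapply is_derive_ext; [|exact H]. intros t. unfold Rdiv. rewrite Rmult_comm. f_equal. f_equal. ring.
  - rewrite fact_simpl, mult_INR, S_INR.
    replace (z + (a + (INR m + 1))) with (z + a + 1 + INR m) by ring.
    field. split; [apply INR_fact_neq_0|]. pose proof (pos_INR m); lra.
Qed.

Lemma sum_derive (f : nat -> R -> R) (d : nat -> R) (n : nat) (z : R) :
  (forall k, (k <= n)%nat -> is_derive (f k) z (d k)) ->
  is_derive (fun t => sum_f_R0 (fun k => f k t) n) z (sum_f_R0 d n).
Proof.
  induction n as [|n IH]; intros H.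
  - simpl. apply H. lia.
  - simpl. apply (is_derive_plus (fun t => sum_f_R0 (fun k => f k t) n) (f (S n))).
    + apply IH. intros; apply H; lia.
    + apply H; lia.
Qed.

Lemma A_deriv n z : is_derive (A (S n)) z (A n (z + 1)).
Proof.
  unfold A.
  eapply is_derive_ext.
  { intros t. symmetry. simpl sum_f_R0 at 1. reflexivity. }
  replace (sum_f_R0 (fun k : nat => B k * Q (z + 1) (n - k)) n) with
    (sum_f_R0 (fun k : nat => B k * Q (z + 1) (n - k)) n + 0) by ring.
  apply (is_derive_plus (fun t => sum_f_R0 (fun k : nat => B k * Q t (S n - k)) n)
          (fun t => B (S n) * Q t (S n - S n))).
  - apply (sum_derive (fun k t => B k * Q t (S n - k))).
    intros k Hk.
    replace (B k * Q (z + 1) (n - k)) with (B k * Q (z + 0 + 1) (n - k)) by (f_equal; f_equal; ring).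
    apply is_derive_scal.
    apply (is_derive_ext (fun t => Q (t + 0) (S (n - k)))).
    { intros t. rewrite Rplus_0_r. f_equal. lia. }
    apply Q_deriv.
  - rewrite Nat.sub_diag. unfold Q. simpl. 
    auto_derive; auto.
Qed.

Lemma A_eq n : forall z, A n z = Q (z + 1) n.
Proof.
  induction n as [|n IH]; intros z.
  - unfold A, Q, B. simpl. field.
  - set (z0 := - (INR n + 2)).
    assert (Hd : forall t, is_derive (fun t => A (S n) t - Q (t + 1) (S n)) t zero).
    { intros t.
      replace (@zero R_NormedModule) with (A n (t + 1) - Q (t + 1 + 1) n).
      2:{ rewrite IH. replace (t + 1 + 1) with (t + 1 + 1) by ring. simpl. unfold zero; simpl. ring. }
      apply (is_derive_minus (A (S n)) (fun t => Q (t + 1) (S n))).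
      - apply A_deriv.
      - apply Q_deriv. }
    assert (H0 : A (S n) z0 - Q (z0 + 1) (S n) = 0).
    { unfold Q at 1. replace (z0 + 1 + INR (S n)) with 0 by (unfold z0; rewrite S_INR; ring).
      rewrite pow_i by lia. unfold Rdiv; rewrite Rmult_0_l, Rminus_0_r.
      rewrite <- (FD_zero (S n) n 1) by lia.
      unfold A, FD. apply sum_eq. intros k Hk.
      unfold B, Q.
      replace (z0 + INR (S n - k)) with (-1 * INR (S k)) by
        (unfold z0; rewrite minus_INR by lia; rewrite !S_INR; ring).
      rewrite Rpow_mult_distr.
      replace (1 + INR k) with (INR (S k)) by (rewrite S_INR; ring).
      assert (HP : INR (S k) ^ k * INR (S k) ^ (S n - k) = INR (S k) * INR (S k) ^ n).
      { rewrite <- pow_add. replace (k + (S n - k))%nat with (S n) by lia. reflexivity. }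
      transitivity ((-1) ^ (S n - k) * (INR (S k) ^ k * INR (S k) ^ (S n - k)) /
          (INR (fact (S k)) * INR (fact (S n - k)))).
      { field. split; apply INR_fact_neq_0. }
      rewrite HP.
      rewrite (fact_simpl k), mult_INR.
      field. repeat split; try apply INR_fact_neq_0. rewrite S_INR; pose proof (pos_INR k); lra. }
    destruct (Rtotal_order z z0) as [Hlt|[Heq|Hgt]].
    + assert (E := eq_is_derive (fun t => A (S n) t - Q (t + 1) (S n)) z z0 (fun t _ => Hd t) Hlt).
      simpl in E. lra.
    + subst z. lra.
    + assert (E := eq_is_derive (fun t => A (S n) t - Q (t + 1) (S n)) z0 z (fun t _ => Hd t) Hgt).
      simpl in E. lra.
Qed.


Lemma Q1 m : Q 1 m = INR (S m) * B m.
Proof.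
  unfold Q, B. rewrite fact_simpl, mult_INR, S_INR.
  replace (1 + INR m) with (INR m + 1) by ring.
  field. split; [apply INR_fact_neq_0|]. pose proof (pos_INR m); lra.
Qed.

Lemma coefB n : PS_derive B n = PS_mult B B n + PS_incr_1 (PS_mult B (PS_derive B)) n.
Proof.
  assert (HA := A_eq n 1). unfold A in HA.
  assert (HL : PS_derive B n = Q (1 + 1) n).
  { unfold PS_derive, B, Q.
    rewrite (fact_simpl (S n)), (fact_simpl n), !mult_INR, !S_INR.
    replace (INR n + 1 + 1) with (1 + 1 + INR n) by ring.
    simpl pow at 1.
    field. pose proof (pos_INR n). repeat split; try apply INR_fact_neq_0; lra. }
  rewrite HL, <- HA.
  destruct n as [|m].
  - simpl. unfold zero; simpl. rewrite Q1. unfold PS_mult. simpl. ring.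
  - simpl PS_incr_1. unfold PS_mult.
    rewrite !tech5. rewrite Nat.sub_diag.
    rewrite Q1.
    transitivity (sum_f_R0 (fun k => B k * B (S m - k) + B k * PS_derive B (m - k)) m
       + B (S m) * B 0). 2:{ rewrite sum_plus. ring. }
    f_equal.
    + apply sum_eq. intros k Hk. rewrite Q1.
      replace (S m - k)%nat with (S (m - k)) by lia. unfold PS_derive.
      rewrite (S_INR (S (m - k))). ring.
    + simpl INR. ring.
Qed.

Lemma powfact_le n : INR n ^ n / INR (fact n) <= exp (INR n).
Proof.
  pose proof (exp_ge_taylor (INR n) n (pos_INR n)) as H.
  destruct n as [|n].
  - simpl in *. lra.
  - rewrite tech5 in H.
    assert (0 <= sum_f_R0 (fun k : nat => INR (S n) ^ k / INR (fact k)) n).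
    { apply cond_pos_sum. intros k. apply Rdiv_le_0_compat.
      apply pow_le, pos_INR. apply lt_0_INR, lt_O_fact. }
    lra.
Qed.

Lemma exp_INR_S n : exp (INR n + 1) = exp (INR n) * exp 1.
Proof. apply exp_plus. Qed.

Lemma exp_INR_pow n : exp (INR n) = exp 1 ^ n.
Proof.
  induction n as [|n IH].
  - simpl. apply exp_0.
  - rewrite S_INR, exp_plus, IH. simpl. ring.
Qed.

Lemma B_nonneg n : 0 <= B n.
Proof. unfold B. apply Rdiv_le_0_compat. apply pow_le, pos_INR. apply lt_0_INR, lt_O_fact. Qed.

Lemma B_bound n : Rabs (B n) <= exp (INR n + 1).
Proof.
  rewrite Rabs_pos_eq by apply B_nonneg.
  rewrite <- S_INR. eapply Rle_trans; [|apply powfact_le].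
  unfold B. unfold Rdiv. apply Rmult_le_compat_r.
  - left. apply Rinv_0_lt_compat, lt_0_INR, lt_O_fact.
  - change (INR (S n) ^ S n) with (INR (S n) * INR (S n) ^ n). rewrite <- (Rmult_1_l (INR (S n) ^ n)) at 1.
    apply Rmult_le_compat_r. apply pow_le, pos_INR. rewrite S_INR; pose proof (pos_INR n); lra.
Qed.

Lemma radius_ok (a : nat -> R) :
  (forall n, Rabs (a n) <= exp (INR n + 1)) ->
  forall y, Rabs y < / exp 1 -> Rbar_lt (Rabs y) (CV_radius a).
Proof.
  intros Ha y Hy.
  assert (He : 0 < exp 1) by apply exp_pos.
  set (r := (Rabs y + / exp 1) / 2).
  assert (Hr0 : 0 <= r). { unfold r. pose proof (Rabs_pos y). pose proof (Rinv_0_lt_compat _ He). lra. }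
  assert (Hr1 : exp 1 * r < 1).
  { assert (r < / exp 1) by (unfold r; lra).
    apply Rmult_lt_compat_l with (r := exp 1) in H; [|lra].
    rewrite Rinv_r in H; lra. }
  assert (Hd : CV_disk a r).
  { unfold CV_disk.
    apply (@ex_series_le R_AbsRing R_CompleteNormedModule _ (fun n => exp 1 * (exp 1 * r) ^ n)).
    - intros n. change norm with Rabs. rewrite Rabs_Rabsolu, Rabs_mult, (Rabs_pos_eq (r^n)) by (apply pow_le; lra).
      rewrite Rpow_mult_distr, <- exp_INR_pow.
      replace (exp 1 * (exp (INR n) * r ^ n)) with (exp (INR n + 1) * r ^ n) by (rewrite exp_plus; ring).
      apply Rmult_le_compat_r. apply pow_le; lra. apply Ha.
    - assert (G : ex_series (fun n => (exp 1 * r) ^ n)).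
      { apply ex_series_geom. rewrite Rabs_pos_eq; [lra|]. apply Rmult_le_pos; lra. }
      exact (@ex_series_scal_l R_AbsRing R_NormedModule (exp 1) _ G). }
  assert (Hle := proj1 (Lub_Rbar_correct (CV_disk a)) r Hd).
  unfold CV_radius. destruct (Lub_Rbar (CV_disk a)) as [rho| |]; simpl in *; auto.
  unfold r in Hle. lra.
Qed.


Lemma der_mul (f g : R -> R) x df dg : is_derive f x df -> is_derive g x dg ->
  is_derive (fun t => f t * g t) x (df * g x + f x * dg).
Proof. intros Hf Hg. apply (is_derive_mult f g x df dg Hf Hg). intros; apply Rmult_comm. Qed.

Lemma der_exp (f : R -> R) x df : is_derive f x df ->
  is_derive (fun t => exp (f t)) x (df * exp (f x)).
Proof. intros Hf. apply (is_derive_comp exp f x (exp (f x)) df). apply is_derive_exp. exact Hf. Qed.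

Lemma der_opp (f : R -> R) x df : is_derive f x df -> is_derive (fun t => - f t) x (- df).
Proof. intros Hf. apply (is_derive_opp f x df Hf). Qed.

Lemma der_id x : is_derive (fun t : R => t) x 1.
Proof. exact (@is_derive_id R_AbsRing x). Qed.

Lemma const_on (h : R -> R) (y : R) :
  (forall t, Rabs t < / exp 1 -> is_derive h t 0) -> Rabs y < / exp 1 -> h y = h 0.
Proof.
  intros Hd Hy.
  destruct (Rtotal_order y 0) as [Hlt|[Heq|Hgt]].
  - apply (eq_is_derive h y 0); [|exact Hlt]. intros t Ht. apply Hd.
    rewrite Rabs_left1 in Hy by lra. apply Rabs_def1; lra.
  - subst; reflexivity.
  - symmetry. apply (eq_is_derive h 0 y); [|exact Hgt]. intros t Ht. apply Hd.
    rewrite Rabs_pos_eq in Hy by lra. apply Rabs_def1; lra.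
Qed.

Definition E (y : R) : R := PSeries B y.
Definition E' (y : R) : R := PSeries (PS_derive B) y.

Lemma rB y : Rabs y < / exp 1 -> Rbar_lt (Rabs y) (CV_radius B).
Proof. apply radius_ok. apply B_bound. Qed.

Lemma rdB y : Rabs y < / exp 1 -> Rbar_lt (Rabs y) (CV_radius (PS_derive B)).
Proof. rewrite CV_radius_derive. apply rB. Qed.

Lemma E_der y : Rabs y < / exp 1 -> is_derive E y (E' y).
Proof. intros Hy. apply is_derive_PSeries, rB, Hy. Qed.

Lemma ODE y : Rabs y < / exp 1 -> E' y = E y * E y + y * (E y * E' y).
Proof.
  intros Hy.
  assert (K : PSeries (PS_derive B) y = PSeries (PS_mult B B) y + y * PSeries (PS_mult B (PS_derive B)) y).
  { rewrite (PSeries_ext _ (PS_plus (PS_mult B B) (PS_incr_1 (PS_mult B (PS_derive B))))) by apply coefB.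
    rewrite PSeries_plus.
    - rewrite PSeries_incr_1. reflexivity.
    - apply ex_pseries_mult; apply rB; auto.
    - apply ex_pseries_incr_1. apply ex_pseries_mult; [apply rB|apply rdB]; auto. }
  unfold E', E. rewrite K at 1. rewrite !PSeries_mult; try apply rB; try apply rdB; auto.
Qed.

Lemma H_one y : Rabs y < / exp 1 -> E y * exp (- (y * E y)) = 1.
Proof.
  intros Hy.
  set (h := fun t => E t * exp (- (t * E t))).
  change (h y = 1). rewrite (const_on h y); auto.
  - unfold h. rewrite Rmult_0_l, Ropp_0, exp_0. unfold E. rewrite PSeries_0. unfold B. simpl. field.
  - intros t Ht. unfold h.
    assert (D := der_mul E (fun t => exp (- (t * E t))) t _ _ (E_der t Ht)
       (der_exp _ t _ (der_opp _ t _ (der_mul (fun t => t) E t _ _ (der_id t) (E_der t Ht))))).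
    replace 0 with (E' t * exp (- (t * E t)) + E t * (- (1 * E t + t * E' t) * exp (- (t * E t)))).
    + exact D.
    + rewrite (ODE t Ht) at 1. ring.
Qed.


Definition D (k : nat) : R := INR k ^ k / INR (fact (S k)).
Definition G2 (y : R) : R := PSeries (PS_incr_1 D) y.

Lemma D_nonneg n : 0 <= D n.
Proof. unfold D. apply Rdiv_le_0_compat. apply pow_le, pos_INR. apply lt_0_INR, lt_O_fact. Qed.

Lemma D_le n : D n <= exp (INR n).
Proof.
  eapply Rle_trans; [|apply powfact_le]. unfold D, Rdiv. apply Rmult_le_compat_l.
  apply pow_le, pos_INR. apply Rinv_le_contravar. apply lt_0_INR, lt_O_fact.
  rewrite fact_simpl, mult_INR. rewrite <- (Rmult_1_l (INR (fact n))) at 1.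
  apply Rmult_le_compat_r. apply pos_INR. rewrite S_INR; pose proof (pos_INR n); lra.
Qed.

Lemma incrD_bound n : Rabs (PS_incr_1 D n) <= exp (INR n + 1).
Proof.
  destruct n as [|n]; simpl PS_incr_1.
  - unfold zero; simpl. rewrite Rabs_R0. left; apply exp_pos.
  - rewrite Rabs_pos_eq by apply D_nonneg. eapply Rle_trans; [apply D_le|].
    left. apply exp_increasing. rewrite S_INR. lra.
Qed.

Lemma incrB_bound n : Rabs (PS_incr_1 B n) <= exp (INR n + 1).
Proof.
  destruct n as [|n]; simpl PS_incr_1.
  - unfold zero; simpl. rewrite Rabs_R0. left; apply exp_pos.
  - eapply Rle_trans; [apply B_bound|].
    left. apply exp_increasing. rewrite S_INR. lra.
Qed.

Lemma rD y : Rabs y < / exp 1 -> Rbar_lt (Rabs y) (CV_radius (PS_incr_1 D)).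
Proof. apply radius_ok. apply incrD_bound. Qed.

Lemma G2_der y : Rabs y < / exp 1 -> is_derive G2 y (1 + y * (E y + y * E' y)).
Proof.
  intros Hy.
  assert (H := is_derive_PSeries _ _ (rD y Hy)).
  replace (1 + y * (E y + y * E' y)) with (PSeries (PS_derive (PS_incr_1 D)) y). exact H.
  rewrite PSeries_decr_1.
  2:{ apply ex_pseries_derive, rD, Hy. }
  f_equal.
  - unfold PS_derive, D. simpl. unfold Rdiv. rewrite Rinv_1. ring.
  - f_equal.
    rewrite (PSeries_ext _ (PS_plus B (PS_incr_1 (PS_derive B)))).
    + rewrite PSeries_plus.
      * rewrite PSeries_incr_1. reflexivity.
      * apply CV_radius_inside, rB, Hy.
      * apply ex_pseries_incr_1, CV_radius_inside, rdB, Hy.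
    + intros n. unfold PS_decr_1, PS_derive, PS_plus. simpl PS_incr_1.
      transitivity (INR (S n) * B n).
      * unfold D, B. rewrite (fact_simpl (S n)), mult_INR.
        change (INR (S n) ^ S n) with (INR (S n) * INR (S n) ^ n).
        field. split; [apply INR_fact_neq_0|]. rewrite !S_INR; pose proof (pos_INR n); lra.
      * destruct n as [|n]; simpl PS_incr_1.
        -- unfold plus, zero; simpl. ring.
        -- unfold plus; simpl. ring.
Qed.

Lemma G2_eq y : Rabs y < / exp 1 -> G2 y = 1 - exp (- (y * E y)).
Proof.
  intros Hy.
  set (h := fun t => G2 t - 1 + exp (- (t * E t))).
  assert (h y = 0).
  { rewrite (const_on h y); auto.
    - unfold h, G2. rewrite PSeries_0. simpl. unfold zero; simpl.
      rewrite Rmult_0_l, Ropp_0, exp_0. ring.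
    - intros t Ht. unfold h.
      assert (Dd := is_derive_plus _ _ t _ _
        (is_derive_minus G2 (fun _ => 1) t _ 0 (G2_der t Ht) (is_derive_const 1 t))
        (der_exp _ t _ (der_opp _ t _ (der_mul (fun t => t) E t _ _ (der_id t) (E_der t Ht))))).
      replace 0 with (plus (minus (1 + t * (E t + t * E' t)) 0) (- (1 * E t + t * E' t) * exp (- (t * E t)))).
      + exact Dd.
      + unfold plus, minus, opp; simpl.
        set (X := exp (- (t * E t))).
        assert (HX : E t * X = 1) by apply H_one, Ht.
        assert (H1 : E' t * X = E t + t * E' t).
        { rewrite (ODE t Ht) at 1. transitivity ((E t * X) * E t + t * E' t * (E t * X)); [ring|].
          rewrite HX; ring. }
        rewrite Ropp_0. change (plus (1 + t * (E t + t * E' t)) 0) with ((1 + t * (E t + t * E' t)) + 0). transitivity (1 - E t * X + t * (E t + t * E' t - E' t * X)); [ring|].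
        rewrite HX, H1. ring. }
  unfold h in H. lra.
Qed.

Lemma E_pos y : Rabs y < / exp 1 -> 0 < E y.
Proof.
  intros Hy. pose proof (H_one y Hy) as H. pose proof (exp_pos (- (y * E y))).
  destruct (Rle_or_lt (E y) 0); [|auto]. nra.
Qed.

Lemma inv_e_pos : 0 < / exp 1.
Proof. apply Rinv_0_lt_compat, exp_pos. Qed.

Lemma S_facts y : 0 <= y < / exp 1 ->
  0 <= y * E y < 1 /\ (y * E y) * exp (- (y * E y)) = y.
Proof.
  intros Hy.
  assert (Hy' : Rabs y < / exp 1) by (rewrite Rabs_pos_eq; lra).
  assert (Hfix : forall t, Rabs t < / exp 1 -> (t * E t) * exp (- (t * E t)) = t).
  { intros t Ht. rewrite Rmult_assoc, H_one by auto. ring. }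
  pose proof (E_pos y Hy').
  split; [split|].
  - apply Rmult_le_pos; lra.
  - destruct (Rlt_or_le (y * E y) 1) as [Hl|Hge]; auto.
    exfalso.
    destruct (Rle_lt_or_eq_dec 0 y ltac:(lra)) as [Hy0|Hy0].
    2:{ subst y. lra. }
    assert (Hc : forall a, 0 <= a <= y -> continuity_pt (fun t => t * E t - 1) a).
    { intros a Ha. apply continuity_pt_filterlim. apply (ex_derive_continuous (fun t => t * E t - 1)).
      assert (Ha' : Rabs a < / exp 1) by (rewrite Rabs_pos_eq; lra).
      eexists. apply (is_derive_minus (fun t => t * E t) (fun _ => 1)).
      apply (der_mul (fun t => t) E a _ _ (der_id a) (E_der a Ha')). apply is_derive_const. }
    destruct (Rle_lt_or_eq_dec 1 (y * E y) Hge) as [Hgt|Heq].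
    + destruct (Ranalysis5.IVT_interv (fun t => t * E t - 1) 0 y Hc Hy0) as [z [Hz Hz0]].
      * lra.
      * lra.
      * assert (Hz' : Rabs z < / exp 1) by (rewrite Rabs_pos_eq; lra).
        pose proof (Hfix z Hz'). replace (z * E z) with 1 in H0 by lra.
        rewrite Rmult_1_l, exp_Ropp in H0. lra.
    + pose proof (Hfix y Hy'). rewrite <- Heq in H0. rewrite Rmult_1_l, exp_Ropp in H0. lra.
  - apply Hfix, Hy'.
Qed.


Lemma ue_strict u v : -1 <= u -> u < v -> u * exp u < v * exp v.
Proof.
  intros Hu Huv.
  destruct (Rlt_or_le 0 u) as [Hp|Hn].
  - apply Rmult_gt_0_lt_compat; try apply exp_pos; try lra. apply exp_increasing; lra.
  - set (d := v - u).
    assert (Hd : 1 + - d < exp (- d)) by (apply exp_ineq1; unfold d; lra).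
    assert (Heu : exp u = exp v * exp (- d)) by (rewrite <- exp_plus; f_equal; unfold d; ring).
    rewrite Heu. pose proof (exp_pos v). pose proof (exp_pos (-d)).
    assert (u * exp (- d) <= u * (1 - d)) by (apply Rmult_le_compat_neg_l; lra).
    destruct (Rle_lt_or_eq_dec u 0 Hn) as [Hneg|Hz].
    + assert (u * exp (- d) < u * (1 - d)) by (apply Rmult_lt_gt_compat_neg_l; lra).
      assert (v - u * exp (-d) > 0) by (unfold d in *; nra).
      nra.
    + subst u. rewrite Rmult_0_l. apply Rmult_lt_0_compat; lra.
Qed.

Lemma ue_inj u v : -1 <= u -> -1 <= v -> u * exp u = v * exp v -> u = v.
Proof.
  intros Hu Hv H.
  destruct (Rtotal_order u v) as [Hl|[He|Hg]]; auto.
  - pose proof (ue_strict u v Hu Hl). lra.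
  - pose proof (ue_strict v u Hv Hg). lra.
Qed.

Lemma partial_le_series (a : nat -> R) N :
  (forall k, 0 <= a k) -> ex_series a -> sum_f_R0 a N <= Series a.
Proof.
  intros Hp Hex. apply sum_incr; [|auto].
  apply is_series_Reals, Series_correct, Hex.
Qed.

Lemma pow_diff_le x y k : 0 <= y <= x -> x <= 1 -> x ^ k - y ^ k <= INR k * (x - y).
Proof.
  intros Hy Hx. induction k as [|k IH].
  - simpl. lra.
  - rewrite S_INR. simpl.
    assert (y ^ k <= 1) by (rewrite <- (pow1 k); apply pow_incr; lra).
    assert (y ^ k <= x ^ k) by (apply pow_incr; lra).
    assert (x * (x ^ k - y ^ k) <= x ^ k - y ^ k) by (rewrite <- (Rmult_1_l (x ^ k - y ^ k)) at 2; apply Rmult_le_compat_r; lra).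
    assert (y ^ k * (x - y) <= x - y) by (rewrite <- (Rmult_1_l (x - y)) at 2; apply Rmult_le_compat_r; lra).
    replace (x * x ^ k - y * y ^ k) with (x * (x ^ k - y ^ k) + y ^ k * (x - y)) by ring.
    lra.
Qed.

Lemma poly_diff_le (c : nat -> R) x y N : (forall k, 0 <= c k) -> 0 <= y <= x -> x <= 1 ->
  sum_f_R0 (fun k => c k * x ^ k) N - sum_f_R0 (fun k => c k * y ^ k) N <=
  sum_f_R0 (fun k => c k * INR k) N * (x - y).
Proof.
  intros Hc Hy Hx. induction N as [|N IH].
  - simpl. specialize (Hc 0%nat). nra.
  - rewrite !tech5. pose proof (pow_diff_le x y (S N) Hy Hx). specialize (Hc (S N)).
    assert (c (S N) * (x ^ S N - y ^ S N) <= c (S N) * (INR (S N) * (x - y))) by (apply Rmult_le_compat_l; lra).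
    lra.
Qed.

Lemma endpoint (c : nat -> R) (L : R) :
  (forall k, 0 <= c k) ->
  (forall y, 0 <= y < / exp 1 -> ex_series (fun k => c k * y ^ k) /\ Series (fun k => c k * y ^ k) <= L) ->
  (forall eps, 0 < eps -> exists y, 0 <= y < / exp 1 /\ L - eps <= Series (fun k => c k * y ^ k)) ->
  ex_series (fun k => c k * (/ exp 1) ^ k) /\ Series (fun k => c k * (/ exp 1) ^ k) = L.
Proof.
  intros Hc Hup Happ.
  set (x := / exp 1).
  assert (Hx0 : 0 < x) by (apply Rinv_0_lt_compat, exp_pos).
  assert (Hx1 : x <= 1).
  { unfold x. pose proof (exp_ineq1_le 1). pose proof (Rinv_le_contravar 1 (exp 1) ltac:(lra) ltac:(lra)) as HH.
    rewrite Rinv_1 in HH. exact HH. }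
  assert (Hnn : forall y k, 0 <= y -> 0 <= c k * y ^ k).
  { intros y k Hy. apply Rmult_le_pos; [apply Hc|apply pow_le; lra]. }
  assert (Hpart : forall N, sum_f_R0 (fun k => c k * x ^ k) N <= L).
  { intros N. destruct (Rle_or_lt (sum_f_R0 (fun k => c k * x ^ k) N) L) as [H|H]; auto.
    exfalso.
    set (K := sum_f_R0 (fun k => c k * INR k) N).
    assert (HK : 0 <= K) by (apply cond_pos_sum; intros k; apply Rmult_le_pos; [apply Hc|apply pos_INR]).
    set (g := sum_f_R0 (fun k => c k * x ^ k) N - L).
    set (t := Rmin (x / 2) (g / (2 * (K + 1)))).
    assert (Ht0 : 0 < t). { unfold t. apply Rmin_glb_lt. lra. apply Rdiv_lt_0_compat; unfold g; lra. }
    assert (Ht1 : t <= x / 2) by apply Rmin_l.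
    assert (Ht2 : t <= g / (2 * (K + 1))) by apply Rmin_r.
    assert (HKt : K * t < g).
    { assert (K * t <= K * (g / (2 * (K + 1)))) by (apply Rmult_le_compat_l; lra).
      assert (K * (g / (2 * (K + 1))) < g).
      { unfold Rdiv. assert (0 < g) by (unfold g; lra).
        replace (K * (g * / (2 * (K + 1)))) with (g * (K / (2 * (K + 1)))) by (field; lra).
        assert (K / (2 * (K + 1)) < 1).
        { apply (Rmult_lt_reg_r (2 * (K + 1))); [lra|]. unfold Rdiv. rewrite Rmult_assoc, Rinv_l by lra. lra. }
        nra. }
      lra. }
    set (y := x - t).
    assert (Hy : 0 <= y < x) by (unfold y; lra).
    pose proof (poly_diff_le c x y N Hc ltac:(lra) Hx1) as Hd.
    replace (x - y) with t in Hd by (unfold y; ring).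
    destruct (Hup y Hy) as [Hey HL].
    pose proof (partial_le_series _ N (fun k => Hnn y k (proj1 Hy)) Hey).
    unfold g, K in *. lra. }
  assert (Hex : ex_series (fun k => c k * x ^ k)).
  { destruct (growing_cv (fun n => sum_f_R0 (fun k => c k * x ^ k) n)) as [l Hl].
    - intros n. cbv beta. rewrite tech5. pose proof (Hnn x (S n) ltac:(lra)). lra.
    - exists L. intros r [i Hi]. subst r. apply Hpart.
    - exists l. apply is_series_Reals. exact Hl. }
  split; auto.
  apply Rle_antisym.
  - assert (Hs := Series_correct _ Hex). apply is_series_Reals in Hs.
    assert (Hl : is_lim_seq (fun n => sum_f_R0 (fun k => c k * x ^ k) n) (Series (fun k => c k * x ^ k))).
    { apply is_lim_seq_Reals. exact Hs. }
    assert (Hle := is_lim_seq_le _ _ _ _ Hpart Hl (is_lim_seq_const L)). simpl in Hle. exact Hle.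
  - apply Rnot_lt_le. intros Hlt.
    set (eps := L - Series (fun k => c k * x ^ k)).
    destruct (Happ (eps / 2) ltac:(unfold eps; lra)) as [y [Hy HLy]].
    assert (Series (fun k => c k * y ^ k) <= Series (fun k => c k * x ^ k)).
    { apply Series_le; auto. intros n. split. apply Hnn; lra.
      apply Rmult_le_compat_l; [apply Hc|]. apply pow_incr; unfold x; lra. }
    unfold eps in *. lra.
Qed.


Lemma ln_le' x y : 0 < x -> x <= y -> ln x <= ln y.
Proof. intros Hx Hxy. destruct (Rle_lt_or_eq_dec x y Hxy) as [H|H]. left; apply ln_increasing; auto. subst; lra. Qed.

Lemma exp_le' x y : x <= y -> exp x <= exp y.
Proof. intros Hxy. destruct (Rle_lt_or_eq_dec x y Hxy) as [H|H]. left; apply exp_increasing; auto. subst; lra. Qed.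

Lemma inv_e : / exp 1 = exp (-1).
Proof. rewrite <- exp_Ropp. f_equal. Qed.

Lemma inner y : 0 <= y < / exp 1 ->
  ex_series (fun k => PS_incr_1 B k * y ^ k) /\ Series (fun k => PS_incr_1 B k * y ^ k) = y * E y /\
  ex_series (fun k => PS_incr_1 D k * y ^ k) /\ Series (fun k => PS_incr_1 D k * y ^ k) = 1 - exp (- (y * E y)).
Proof.
  intros Hy. assert (Hy' : Rabs y < / exp 1) by (rewrite Rabs_pos_eq; lra).
  split; [|split; [|split]].
  - apply ex_series_Rabs. apply CV_disk_inside. apply radius_ok; auto. apply incrB_bound.
  - change (PSeries (PS_incr_1 B) y = y * E y). rewrite PSeries_incr_1. reflexivity.
  - apply ex_series_Rabs. apply CV_disk_inside. apply rD; auto.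
  - change (G2 y = 1 - exp (- (y * E y))). apply G2_eq; auto.
Qed.

Lemma s_unique s1 s2 : 0 <= s1 <= 1 -> 0 <= s2 <= 1 -> s1 * exp (- s1) = s2 * exp (- s2) -> s1 = s2.
Proof.
  intros H1 H2 H. assert (- s1 = - s2); [|lra].
  apply ue_inj; lra.
Qed.

Lemma approx sg : 0 <= sg < 1 ->
  let y := sg * exp (- sg) in
  0 <= y < / exp 1 /\ Series (fun k => PS_incr_1 B k * y ^ k) = sg /\
  Series (fun k => PS_incr_1 D k * y ^ k) = 1 - exp (- sg).
Proof.
  intros Hs y.
  assert (Hy : 0 <= y < / exp 1).
  { unfold y. split. apply Rmult_le_pos; [lra|left; apply exp_pos].
    rewrite inv_e.
    assert (sg < exp (sg - 1)) by (pose proof (exp_ineq1 (sg - 1) ltac:(lra)); lra).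
    replace (exp (-1)) with (exp (sg - 1) * exp (- sg)) by (rewrite <- exp_plus; f_equal; ring).
    apply Rmult_lt_compat_r; [apply exp_pos|auto]. }
  destruct (inner y Hy) as [_ [HB [_ HD]]].
  destruct (S_facts y Hy) as [Hs1 Hs2].
  assert (Heq : y * E y = sg).
  { apply s_unique; try lra. rewrite Hs2. reflexivity. }
  split; auto. rewrite HB, HD, Heq. auto.
Qed.

Lemma core y : 0 <= y <= / exp 1 -> exists s, 0 <= s <= 1 /\ s * exp (- s) = y /\
  ex_series (fun k => PS_incr_1 B k * y ^ k) /\ Series (fun k => PS_incr_1 B k * y ^ k) = s /\
  ex_series (fun k => PS_incr_1 D k * y ^ k) /\ Series (fun k => PS_incr_1 D k * y ^ k) = 1 - exp (- s).
Proof.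
  intros Hy. destruct (Rle_lt_or_eq_dec y (/ exp 1) (proj2 Hy)) as [Hlt|Heq].
  - destruct (S_facts y (conj (proj1 Hy) Hlt)) as [Hs1 Hs2].
    destruct (inner y (conj (proj1 Hy) Hlt)) as [H1 [H2 [H3 H4]]].
    exists (y * E y). repeat split; auto; lra.
  - subst y.
    assert (Hnb : forall k, 0 <= PS_incr_1 B k).
    { intros [|k]; simpl. unfold zero; simpl; lra. apply B_nonneg. }
    assert (Hnd : forall k, 0 <= PS_incr_1 D k).
    { intros [|k]; simpl. unfold zero; simpl; lra. apply D_nonneg. }
    assert (Hdelta : forall eps, 0 < eps -> exists sg, 0 <= sg < 1 /\ 1 - eps <= sg /\ exp (- sg) - exp (-1) <= eps).
    { intros eps He. set (d := Rmin (1/2) (eps / 2)).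
      assert (0 < d) by (unfold d; apply Rmin_glb_lt; lra).
      assert (d <= 1/2) by apply Rmin_l. assert (d <= eps / 2) by apply Rmin_r.
      exists (1 - d). split; [lra|split; [lra|]].
      assert (Hed : exp d <= 1 + 2 * d).
      { pose proof (exp_ineq1_le (- d)).
        assert (exp d * exp (- d) = 1) by (rewrite <- exp_plus, Rplus_opp_r, exp_0; reflexivity).
        pose proof (exp_pos d). nra. }
      replace (exp (- (1 - d))) with (exp (-1) * exp d) by (rewrite <- exp_plus; f_equal; ring).
      assert (exp (-1) <= 1) by (rewrite <- exp_0; apply exp_le'; lra).
      pose proof (exp_pos (-1)). nra. }
    destruct (endpoint (PS_incr_1 B) 1 Hnb) as [HB1 HB2].
    { intros y Hy'. destruct (inner y Hy') as [H1 [H2 _]]. destruct (S_facts y Hy') as [Hs _].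
      split; auto. lra. }
    { intros eps He. destruct (Hdelta eps He) as [sg [Hsg [Hsg1 _]]].
      destruct (approx sg Hsg) as [Hy' [HB _]]. eexists; split; [exact Hy'|]. rewrite HB. lra. }
    destruct (endpoint (PS_incr_1 D) (1 - exp (-1)) Hnd) as [HD1 HD2].
    { intros y Hy'. destruct (inner y Hy') as [_ [_ [H3 H4]]]. destruct (S_facts y Hy') as [Hs _].
      split; auto. rewrite H4. assert (exp (-1) <= exp (- (y * E y))) by (apply exp_le'; lra). lra. }
    { intros eps He. destruct (Hdelta eps He) as [sg [Hsg [_ Hsg2]]].
      destruct (approx sg Hsg) as [Hy' [_ HD]]. eexists; split; [exact Hy'|]. rewrite HD. lra. }
    exists 1. repeat split; auto; try lra. rewrite Rmult_1_l, inv_e. reflexivity.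
Qed.


Lemma phi_exp u : phi (exp u) = - (u * exp u).
Proof. unfold phi. rewrite ln_exp. ring. Qed.

Lemma phi_inj_r x1 x2 : / exp 1 <= x1 <= 1 -> / exp 1 <= x2 <= 1 -> phi x1 = phi x2 -> x1 = x2.
Proof.
  intros H1 H2 H.
  assert (He : 0 < / exp 1) by apply inv_e_pos.
  assert (Hl : forall x, / exp 1 <= x <= 1 -> -1 <= ln x).
  { intros x Hx. rewrite inv_e in Hx. rewrite <- (ln_exp (-1)). apply ln_le'; [apply exp_pos|lra]. }
  rewrite <- (exp_ln x1), <- (exp_ln x2) in H by lra.
  rewrite !phi_exp in H.
  assert (ln x1 = ln x2) by (apply ue_inj; try apply Hl; auto; lra).
  rewrite <- (exp_ln x1), <- (exp_ln x2) by lra. f_equal; auto.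
Qed.

Lemma r_inv_val y x : / exp 1 <= x <= 1 -> phi x = y -> r_inv y = x.
Proof.
  intros Hx Hp. unfold r_inv, inv_on.
  assert (Hex : exists x, / exp 1 <= x <= 1 /\ phi x = y) by (exists x; auto).
  destruct (epsilon_spec (inhabits 0) _ Hex) as [H1 H2].
  apply phi_inj_r; auto. congruence.
Qed.

Lemma W0_val v u : -1 <= u -> u * exp u = v -> W0 v = u.
Proof.
  intros Hu Hv. unfold W0.
  assert (Hex : exists u, -1 <= u /\ u * exp u = v) by (exists u; auto).
  destruct (epsilon_spec (inhabits 0) _ Hex) as [H1 H2].
  apply ue_inj; auto. congruence.
Qed.

Lemma phi_range w : 0 <= w <= 1 -> 0 <= phi w <= / exp 1 /\ w * ln w = - phi w.
Proof.
  intros Hw. split; [|unfold phi; ring].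
  destruct (Rle_lt_or_eq_dec 0 w (proj1 Hw)) as [Hp|Hz].
  2:{ subst w. replace (phi 0) with 0 by (unfold phi; ring). split; [lra|left; apply inv_e_pos]. }
  rewrite <- (exp_ln w) by lra. rewrite phi_exp. set (u := ln w).
  assert (Hu : u <= 0). { unfold u. rewrite <- ln_1. apply ln_le'; lra. }
  pose proof (exp_pos u).
  split. nra.
  pose proof (exp_ineq1_le (- u - 1)).
  assert (- u * exp u <= exp (- u - 1) * exp u) by (apply Rmult_le_compat_r; lra).
  replace (exp (- u - 1) * exp u) with (exp (-1)) in H1 by (rewrite <- exp_plus; f_equal; ring).
  rewrite inv_e. lra.
Qed.

Lemma pm1 k : (-1) ^ k * (-1) ^ k = 1.
Proof. rewrite <- Rpow_mult_distr. replace (-1 * -1) with 1 by ring. apply pow1. Qed.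

Theorem proposition10 (w : R) (hw : 0 <= w <= 1) :
  (ex_series (fun k => Rabs (term_g w k)) /\
   Defs.g w = 1 - Series (term_g w)) /\
  (ex_series (fun k => Rabs (term_logg w k)) /\
   ln (Defs.g w) = Series (term_logg w) /\
   Series (term_logg w) = W0 (w * ln w)) /\
  (w <= / exp 1 -> Defs.g w = Defs.f w) /\
  (/ exp 1 <= w -> Defs.g w = w /\ W0 (w * ln w) = ln w).
Proof.
  destruct (phi_range w hw) as [Hy Hwl].
  set (y := phi w) in *.
  destruct (core y Hy) as [s [Hs [Hsy [HB1 [HB2 [HD1 HD2]]]]]].
  assert (HtG : forall k, term_g w k = PS_incr_1 D (S k) * y ^ (S k)).
  { intros k. unfold term_g, D. simpl PS_incr_1. replace (S k - 1)%nat with k by lia. reflexivity. }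
  assert (HtL : forall k, term_logg w k = - (PS_incr_1 B (S k) * y ^ (S k))).
  { intros k. unfold term_logg. change (PS_incr_1 B (S k)) with (B k). unfold B. replace (S k - 1)%nat with k by lia.
    rewrite Hwl. replace (- INR (S k)) with (-1 * INR (S k)) by ring.
    replace (- y) with (-1 * y) by ring. rewrite !Rpow_mult_distr.
    change ((-1) ^ S k) with (-1 * (-1) ^ k).
    transitivity (((-1) ^ k * (-1) ^ k) * (- (INR (S k) ^ k / INR (fact (S k)) * y ^ S k))); [unfold Rdiv; ring|].
    rewrite pm1. ring. }
  assert (Hnb : forall k, 0 <= PS_incr_1 B k * y ^ k).
  { intros [|k]; simpl PS_incr_1. unfold zero; simpl; lra.
    apply Rmult_le_pos. apply B_nonneg. apply pow_le; lra. }
  assert (Hnd : forall k, 0 <= PS_incr_1 D k * y ^ k).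
  { intros [|k]; simpl PS_incr_1. unfold zero; simpl; lra.
    apply Rmult_le_pos. apply D_nonneg. apply pow_le; lra. }
  assert (SG : Series (term_g w) = 1 - exp (- s)).
  { rewrite <- HD2. rewrite (Series_incr_1 (fun k => PS_incr_1 D k * y ^ k)) by auto.
    simpl PS_incr_1 at 1. unfold zero; simpl. rewrite Rmult_0_l, Rplus_0_l.
    apply Series_ext. intros k. rewrite HtG. reflexivity. }
  assert (SL : Series (term_logg w) = - s).
  { rewrite <- HB2. rewrite (Series_incr_1 (fun k => PS_incr_1 B k * y ^ k)) by auto.
    simpl PS_incr_1 at 1. unfold zero; simpl. rewrite Rmult_0_l, Rplus_0_l.
    rewrite <- Series_opp. apply Series_ext. intros k. rewrite HtL. reflexivity. }
  assert (Hg : Defs.g w = exp (- s)).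
  { unfold Defs.g. apply r_inv_val.
    - rewrite inv_e. split; [apply exp_le'; lra| rewrite <- exp_0; apply exp_le'; lra].
    - rewrite phi_exp. fold y. rewrite <- Hsy. ring. }
  assert (HW : W0 (w * ln w) = - s).
  { apply W0_val; [lra|]. rewrite Hwl, <- Hsy. fold y. ring. }
  split; [split|split; [split; [|split]|split]].
  - apply (proj1 (ex_series_incr_1 _)) in HD1.
    eapply ex_series_ext; [|exact HD1]. intros k. simpl.
    rewrite HtG, Rabs_pos_eq. reflexivity. apply (Hnd (S k)).
  - rewrite Hg, SG. ring.
  - apply (proj1 (ex_series_incr_1 _)) in HB1.
    eapply ex_series_ext; [|exact HB1]. intros k. simpl.
    rewrite HtL, Rabs_Ropp, Rabs_pos_eq. reflexivity. apply (Hnb (S k)).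
  - rewrite Hg, SL, ln_exp. reflexivity.
  - rewrite SL, HW. reflexivity.
  - intros Hle. unfold Defs.f, Defs.g. destruct (Rle_dec w (/ exp 1)); [reflexivity|contradiction].
  - intros Hge. split.
    + unfold Defs.g. apply r_inv_val; [lra|reflexivity].
    + apply W0_val.
      * rewrite inv_e in Hge. rewrite <- (ln_exp (-1)). apply ln_le'; [apply exp_pos|lra].
      * rewrite exp_ln. ring. pose proof (exp_pos (-1)). rewrite inv_e in Hge. lra.
Qed.
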